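(* Let $G\subseteq \mathrm{GL}_n(\mathbb{C})$ be a closed subgroup with left Haar measure $\mu$, let $\Gamma\subset G$ be a discrete subgroup, and let $\mathcal{F}_\Gamma\subset G$ be a measurable fundamental domain for $\Gamma$ (the translates $u\mathcal{F}_\Gamma$, $u\in\Gamma$, are pairwise disjoint) with $0<\mu(\mathcal{F}_\Gamma)<\infty$ and $R_\Gamma:=\sup_{g\in\mathcal{F}_\Gamma}\|g\|<\infty$. For $x\in G$ and $M>0$ let $B_x(M)=\{g\in G:\|xg\|\le M\}$. Then for all $x\in G$, $a\in M_{m,n}(\mathbb{C})$, $c>0$ and $M>0$, $$\sum_{u\in\Gamma\cap B_x(M)}e^{-c\|au\|^2}\le\frac{1}{\mu(\mathcal{F}_\Gamma)}\int_{B_x(R_\Gamma M)}e^{-\frac{c}{R_\Gamma^2}\|ag\|^2}\,d\mu(g).$$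
   Context: $\|\cdot\|$ denotes the Frobenius norm of a (possibly rectangular) complex matrix. *)

(* Defs.v *)
From HB Require Import structures.
From mathcomp Require Import all_boot all_order all_algebra.
From mathcomp Require Import all_classical all_reals all_analysis.
From mathcomp.real_closed Require Import complex.
Set Implicit Arguments. Unset Strict Implicit. Unset Printing Implicit Defensive.
Import Order.TTheory GRing.Theory Num.Theory.
Local Open Scope classical_set_scope.
Local Open Scope ring_scope.

Section Defs.
Variable R : realType.

Definition csq (z : R[i]) : R := complex.Re z ^+ 2 + complex.Im z ^+ 2.

Definition frob (p q : nat) (A : 'M[R[i]]_(p, q)) : R :=
  Num.sqrt (\sum_(i < p) \sum_(j < q) csq (A i j)).

Definition Cmx (n : nat) := 'M[R[i]]_n.
HB.instance Definition _ n := Choice.on (Cmx n).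
HB.instance Definition _ n := isPointed.Build (Cmx n) 0.

Definition frob_open (n : nat) : set (set (Cmx n)) :=
  [set A | forall x, A x -> exists2 e : R, 0 < e &
             forall y : Cmx n, frob (y - x) < e -> A y].

Definition MxB (n : nat) := g_sigma_algebraType (@frob_open n).

Definition frob_closed (n : nat) (K : set (Cmx n)) : Prop :=
  forall y : Cmx n, (forall e : R, 0 < e -> exists x, K x /\ frob (y - x) < e) -> K y.

(* compact subsets of M_n(C) (= closed and bounded, Heine-Borel) *)
Definition frob_compact (n : nat) (K : set (Cmx n)) : Prop :=
  frob_closed K /\ exists M : R, forall x, K x -> frob x <= M.

Definition rel_open (n : nat) (G U : set (Cmx n)) : Prop :=
  exists2 V, frob_open V & U = G `&` V.

Definition closed_subgroup_GL (n : nat) (G : set (Cmx n)) : Prop :=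
  [/\ (forall g, G g -> g \in unitmx),
      G 1%:M,
      (forall g h, G g -> G h -> G (g *m h)),
      (forall g, G g -> G (invmx g)) &
      (forall g : Cmx n, g \in unitmx ->
         (forall e : R, 0 < e -> exists h, G h /\ frob (g - h) < e) -> G g)].

Definition discrete_subgroup (n : nat) (G Gam : set (Cmx n)) : Prop :=
  [/\ Gam `<=` G, Gam 1%:M,
      (forall g h, Gam g -> Gam h -> Gam (g *m h)),
      (forall g, Gam g -> Gam (invmx g)) &
      (forall u, Gam u -> exists2 e : R, 0 < e &
          forall v, Gam v -> frob (v - u) < e -> v = u)].

Definition ltrans (n : nat) (x : Cmx n) (A : set (Cmx n)) : set (Cmx n) :=
  [set x *m g | g in A].

(* mu is a left Haar measure of G (a Radon measure on M_n(C) supported on G,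
   nonzero and left G-invariant) *)
Definition left_haar_measure (n : nat) (G : set (MxB n))
    (mu : {measure set (MxB n) -> \bar R}) : Prop :=
  [/\ (forall A, measurable A -> mu A = mu (A `&` G)),
      (0 < mu G)%E,
      (forall x A, G x -> measurable A -> A `<=` G -> mu (ltrans x A) = mu A),
      (forall K, K `<=` G -> frob_compact K -> (mu K < +oo)%E) &
      ((forall A, measurable A -> A `<=` G ->
          mu A = ereal_inf [set mu U | U in [set U | rel_open G U /\ A `<=` U]]) /\
      (forall U, rel_open G U ->
          mu U = ereal_sup [set mu K | K in [set K | frob_compact K /\ K `<=` U]]))].

Definition fundamental_domain (n : nat) (G Gam : set (MxB n)) (F : set (MxB n)) : Prop :=
  [/\ measurable F, F `<=` G &
      (forall u v, Gam u -> Gam v -> u <> v -> ltrans u F `&` ltrans v F = set0)].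

Definition Bx (n : nat) (G : set (MxB n)) (x : Cmx n) (M : R) : set (MxB n) :=
  [set g | G g /\ frob (x *m g) <= M].

End Defs.

(* Main.v *)
Require Import Defs.
From HB Require Import structures.
From mathcomp Require Import all_boot all_order all_algebra.
From mathcomp Require Import all_classical all_reals all_analysis.
From mathcomp.real_closed Require Import complex.
From mathcomp Require Import ring lra measurable_realfun.
Set Implicit Arguments. Unset Strict Implicit. Unset Printing Implicit Defensive.
Import Order.TTheory GRing.Theory Num.Theory.
Local Open Scope classical_set_scope.
Local Open Scope ring_scope.

Section Frob.
Variable R : realType.

Lemma ReD (x y : R[i]) : complex.Re (x + y) = complex.Re x + complex.Re y.
Proof. by case: x; case: y. Qed.
Lemma ImD (x y : R[i]) : complex.Im (x + y) = complex.Im x + complex.Im y.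
Proof. by case: x; case: y. Qed.
Lemma ReM (x y : R[i]) : complex.Re (x * y) = complex.Re x * complex.Re y - complex.Im x * complex.Im y.
Proof. by case: x => a b; case: y => c d. Qed.
Lemma ImM (x y : R[i]) : complex.Im (x * y) = complex.Re x * complex.Im y + complex.Im x * complex.Re y.
Proof. by case: x => a b; case: y => c d /=. Qed.
Lemma Re_sum (I : finType) (F : I -> R[i]) : complex.Re (\sum_i F i) = \sum_i complex.Re (F i).
Proof. by elim/big_rec2: _ => // i y z _ <-; rewrite ReD. Qed.
Lemma Im_sum (I : finType) (F : I -> R[i]) : complex.Im (\sum_i F i) = \sum_i complex.Im (F i).
Proof. by elim/big_rec2: _ => // i y z _ <-; rewrite ImD. Qed.
Lemma cs (I : finType) (p q r s : I -> R) :
  (\sum_k (p k * r k - q k * s k)) ^+ 2 + (\sum_k (p k * s k + q k * r k)) ^+ 2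
  <= (\sum_k (p k ^+ 2 + q k ^+ 2)) * (\sum_k (r k ^+ 2 + s k ^+ 2)).
Proof.
pose Y k l := (p k ^+ 2 + q k ^+ 2) * (r l ^+ 2 + s l ^+ 2) -
  ((p k * r k - q k * s k) * (p l * r l - q l * s l) +
   (p k * s k + q k * r k) * (p l * s l + q l * r l)).
have E : (\sum_k (p k ^+ 2 + q k ^+ 2)) * (\sum_k (r k ^+ 2 + s k ^+ 2)) -
  ((\sum_k (p k * r k - q k * s k)) ^+ 2 + (\sum_k (p k * s k + q k * r k)) ^+ 2)
  = \sum_k \sum_l Y k l.
  rewrite /Y !expr2 !big_distrlr /= -!big_split -sumrB /=; apply: eq_bigr => k _.
  rewrite -!big_split -sumrB /=; apply: eq_bigr => l _; ring.
rewrite -subr_ge0 E.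
have H2 : 2 * (\sum_k \sum_l Y k l) = \sum_k \sum_l (Y k l + Y l k).
  rewrite mulr2n mulrDl mul1r; under [RHS]eq_bigr do rewrite big_split /=.
  by rewrite big_split /= [X in _ + X = _]exchange_big.
have : 0 <= 2 * (\sum_k \sum_l Y k l).
  rewrite H2; apply: sumr_ge0 => k _; apply: sumr_ge0 => l _.
  have -> : Y k l + Y l k =
     (p k * r l + q k * s l - p l * r k - q l * s k) ^+ 2 +
     (q k * r l - p k * s l - q l * r k + p l * s k) ^+ 2 by rewrite /Y; ring.
  by rewrite addr_ge0 // sqr_ge0.
by rewrite pmulr_rge0.
Qed.

Lemma csq_ge0 (z : R[i]) : 0 <= csq z.
Proof. by rewrite /csq addr_ge0 // sqr_ge0. Qed.

Lemma frob_ge0 p q (A : 'M[R[i]]_(p, q)) : 0 <= frob A.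
Proof. exact: sqrtr_ge0. Qed.

Lemma frobM p q r (A : 'M[R[i]]_(p, q)) (B : 'M[R[i]]_(q, r)) :
  frob (A *m B) <= frob A * frob B.
Proof.
rewrite /frob -sqrtrM; last by apply: sumr_ge0 => i _; apply: sumr_ge0 => j _; exact: csq_ge0.
rewrite ler_sqrt; last first.
  by apply: mulr_ge0; apply: sumr_ge0 => i _; apply: sumr_ge0 => j _; exact: csq_ge0.
rewrite [X in _ * X]exchange_big big_distrlr /=; apply: ler_sum => i _.
apply: ler_sum => j _; rewrite mxE /csq Re_sum Im_sum.
rewrite (eq_bigr (fun k => complex.Re (A i k) * complex.Re (B k j) - complex.Im (A i k) * complex.Im (B k j))); last by move=> k _; exact: ReM.
rewrite [X in _ + X ^+ 2](eq_bigr (fun k => complex.Re (A i k) * complex.Im (B k j) + complex.Im (A i k) * complex.Re (B k j))); last by move=> k _; exact: ImM.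
exact: cs.
Qed.
End Frob.
Lemma lmul_meas (R : realType) n (v : Cmx R n) (A : set (MxB R n)) :
  measurable A -> measurable ((fun g : MxB R n => (v *m g : MxB R n)) @^-1` A).
Proof.
move=> mA.
have mL : measurable_fun setT (fun g : MxB R n => (v *m g : MxB R n)).
  have := @measurability _ _ (MxB R n) (MxB R n) setT (fun g : MxB R n => (v *m g : MxB R n)) (@frob_open R n); apply => //.
  move=> _ [V oV <-]; apply: sub_sigma_algebra; rewrite setTI.
  move=> x /= Vx; have [e e0 He] := oV _ Vx.
  have K0 : 0 < frob v + 1 by rewrite ltr_wpDl // frob_ge0.
  exists (e / (frob v + 1)); first by rewrite divr_gt0.
  move=> y hy; apply: He; rewrite -mulmxBr.
  apply: le_lt_trans (frobM _ _) _.
  rewrite ltr_pdivlMr // in hy.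
  apply: le_lt_trans hy; rewrite mulrC; apply: ler_wpM2l; first exact: frob_ge0.
  by rewrite lerDl.
rewrite -[X in measurable X]setTI; exact: mL.
Qed.

Lemma ltransE (R : realType) n (u : MxB R n) (A : set (MxB R n)) :
  u \in unitmx -> ltrans u A = (fun g : MxB R n => (invmx u *m g : MxB R n)) @^-1` A.
Proof.
move=> uU; apply/seteqP; split => g /=.
- by case => f Af <-; rewrite mulKmx.
- by move=> Ag; exists (invmx u *m g) => //; rewrite mulKVmx.
Qed.
Section Mono.
Local Open Scope ereal_scope.
Context d (T : measurableType d) (R : realType) (mu : {measure set T -> \bar R}).
Lemma int_mono (h f : T -> \bar R) : (forall x, 0 <= h x) -> (forall x, h x <= f x) ->
  \int[mu]_(x in setT) h x <= \int[mu]_(x in setT) f x.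
Proof.
move=> h0 hf.
have f0 x : 0 <= f x by apply: le_trans (h0 x) (hf x).
rewrite !ge0_integralTE //.
apply: le_ereal_sup => _ [g /= gh <-]; exists g => //= x.
exact: le_trans (gh x) (hf x).
Qed.
End Mono.

Unset Implicit Arguments.

Theorem mainTheorem7 (R : realType) (n m : nat)
  (G : set (MxB R n)) (mu : {measure set (MxB R n) -> \bar R})
  (Gam F : set (MxB R n)) :
  closed_subgroup_GL G ->
  left_haar_measure G mu ->
  discrete_subgroup G Gam ->
  fundamental_domain G Gam F ->
  (0 < mu F)%E -> (mu F < +oo)%E ->
  (exists B : R, forall g, F g -> frob g <= B) ->
  let RG := sup [set frob g | g in F] in
  forall (x : MxB R n) (a : 'M[R[i]]_(m, n)) (c M : R),
    G x -> 0 < c -> 0 < M ->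
    (\esum_(u in Gam `&` Bx G x M) (expR (- c * frob (a *m u) ^+ 2))%:E
     <= ((fine (mu F))^-1)%:E *
        \int[mu]_(g in Bx G x (RG * M))
           (expR (- (c / RG ^+ 2) * frob (a *m g) ^+ 2))%:E)%E.
Proof.
move=> hG hmu hGam hF mF0 mFoo [B hB] RG x a c M Gx c0 M0.
case: hG => Gunit G1 GM Ginv Gcl.
case: hmu => mu1 muG0 muinv _ _.
case: hGam => GamG _ _ _ _.
case: hF => mF FG Fdisj.
have [f0 Ff0] : exists f, F f.
  case: (pselect (exists f, F f)) => // nF.
  have F0 : F = set0 by apply/seteqP; split => z // Fz; exfalso; apply: nF; exists z.
  by move: mF0; rewrite F0 measure0 ltxx.
have RGub f : F f -> frob f <= RG.
  move=> Ff; apply: ub_le_sup; last by exists f.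
  by exists B => _ [g Fg <-]; exact: hB.
have RG0 : 0 <= RG := le_trans (frob_ge0 f0) (RGub f0 Ff0).
set r := fine (mu F).
have muFE : mu F = r%:E by rewrite fineK // ge0_fin_numE // ltW.
have r0 : 0 < r by rewrite -lte_fin -muFE.
pose e (u : MxB R n) := expR (- c * frob (a *m u) ^+ 2).
pose fx (g : MxB R n) := expR (- (c / RG ^+ 2) * frob (a *m g) ^+ 2).
have key u f : Gam u -> Bx G x M u -> F f ->
    Bx G x (RG * M) (u *m f) /\ e u <= fx (u *m f).
  move=> Gu [_ hxu] Ff; split.
    split; first by apply: GM; [exact: GamG | exact: FG].
    rewrite mulmxA; apply: le_trans (frobM _ _) _; rewrite mulrC.
    by apply: ler_pM => //; [exact: frob_ge0 | exact: frob_ge0 | exact: RGub].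
  rewrite /e /fx ler_expR !mulNr lerN2.
  have h1 : frob (a *m (u *m f)) <= frob (a *m u) * RG.
    rewrite mulmxA; apply: le_trans (frobM _ _) _.
    by apply: ler_wpM2l; [exact: frob_ge0 | exact: RGub].
  have h2 : frob (a *m (u *m f)) ^+ 2 <= frob (a *m u) ^+ 2 * RG ^+ 2.
    rewrite -exprMn; apply: lerXn2r => //; rewrite ?nnegrE ?frob_ge0 //.
    by rewrite mulr_ge0 // frob_ge0.
  have [->|RGn0] := eqVneq RG 0.
    rewrite expr0n /= invr0 mulr0 mul0r; apply: mulr_ge0; [exact: ltW | exact: exprn_ge0 (frob_ge0 _)].
  have c2 : 0 <= c / RG ^+ 2 by apply: divr_ge0; [exact: ltW | exact: exprn_ge0].
  apply: le_trans (ler_wpM2l c2 h2) _.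
  by rewrite mulrCA divfK ?sqrf_eq0 // mulrC.
pose P (k : MxB R n) := (fun g : MxB R n => (invmx k *m g : MxB R n)) @^-1` F.
have mP k : measurable (P k) := lmul_meas _ mF.
have PE u : Gam u -> P u = ltrans u F.
  by move=> Gu; rewrite ltransE //; apply: Gunit; exact: GamG.
rewrite /esum; apply: ge_ereal_sup => _ [S [finS SA] <-].
pose h (g : MxB R n) := (\sum_(u \in S) ((e u)%:E * (\1_(P u) g)%:E))%E.
have I1 : (\int[mu]_(g in setT) h g = \sum_(u \in S) (e u)%:E * r%:E)%E.
  rewrite ge0_integral_fsum //; last first.
  - by move=> k g _; rewrite mule_ge0 // lee_fin ?expR_ge0.
  - move=> k; apply: measurable_funeM.
    apply/measurable_EFinP; exact: measurable_indic.
  apply: eq_fsbigr => u /[1!inE] Su.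
  rewrite ge0_integralZl_EFin //; last by rewrite expR_ge0.
  rewrite integral_indic // setIT PE; last by have [] := SA u Su.
  have [Gu _] := SA u Su.
  rewrite muinv //; first by rewrite muFE.
  exact: GamG.
  apply/measurable_EFinP; exact: measurable_indic.
have I2 : (\int[mu]_(g in setT) h g <= \int[mu]_(g in Bx G x (RG * M))
           (expR (- (c / RG ^+ 2) * frob (a *m g) ^+ 2))%:E)%E.
  rewrite [X in (_ <= X)%E]integral_mkcond; apply: int_mono.
    by move=> g; apply: fsume_ge0 => u _; rewrite mule_ge0 // lee_fin ?expR_ge0.
  move=> g; case: (pselect (exists2 u0, S u0 & P u0 g)) => [[u0 Su0 Pg]|nP].
    have [Gu0 Bu0] := SA u0 Su0.
    rewrite /h (fsbigD1 u0) // fsbig1; last first.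
      move=> u [Su /= neq]; rewrite indicE memNset ?mule0 //.
      move=> Pug; have [Gu _] := SA u Su.
      have : (ltrans u F `&` ltrans u0 F) g by rewrite -PE // -PE.
      by rewrite Fdisj.
    apply: (@le_trans _ _ ((e u0)%:E * (\1_(P u0) g)%:E)%E); first by rewrite /= adde0.
    rewrite indicE mem_set // mule1.
    have [f Ff gE] : ltrans u0 F g by rewrite -PE.
    have [Bg le] := key u0 f Gu0 Bu0 Ff.
    by rewrite /patch mem_set -?gE // lee_fin.
  rewrite /h fsbig1; last first.
    by move=> u Su; rewrite indicE memNset ?mule0 // => Pug; apply: nP; exists u.
  by rewrite /patch; case: ifP => _ //; rewrite lee_fin expR_ge0.
rewrite -ge0_mule_fsuml in I1; last by move=> i; rewrite lee_fin expR_ge0.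
rewrite fsumEFin // in I1 *.
move: I2; rewrite I1.
case: (\int[mu]_(g in Bx G x (RG * M)) _)%E => [s| |] H.
- by rewrite -EFinM lee_fin mulrC ler_pdivlMr // -lee_fin EFinM.
- by rewrite gt0_muley ?leey // lte_fin invr_gt0.
- by rewrite -EFinM leeNy_eq in H.
Qed.
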